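(* For all $\ell\in[n]$ and $r\in\{1,\dots,k\}$, $$\mathbb{E}[v(\mathrm{ALG}^{\ge\ell}_r)]\ \ge\ \frac{1}{\ell}\Big(\mathbb{E}[v(\mathcal{A}(U^{\le\ell}))]+(k-1)\,\mathbb{E}[v(\mathrm{ALG}^{\ge\ell+1}_{r-1})]+(\ell-k)\,\mathbb{E}[v(\mathrm{ALG}^{\ge\ell+1}_{r})]\Big).$$
   Context: Submodular secretary setting. Let $U$ be a finite ground set of $n$ items and $k\ge1$ an integer. Let $v\colon 2^U\to\mathbb{R}_{\ge0}$ be monotone and submodular. The items arrive one per round (rounds $1,\dots,n$) in a uniformly random order; for $\ell\in[n]$, $U^{\le \ell}$ denotes the set of items arriving in rounds $1,\dots,\ell$. $\mathcal{A}$ is an offline algorithm that, for every $L\subseteq U$, returns a set $\mathcal{A}(L)\subseteq L$ with $|\mathcal{A}(L)|\le k$ and $v(\mathcal{A}(L))\ge \alpha\max\{v(T):T\subseteq L,|T|\le k\}$, where $\alpha\in(0,1]$; $\mathcal{A}(L)$ depends only on the set $L$. Random sets $\mathrm{ALG}^{\ge\ell}_r\subseteq U$ for $\ell\in\{1,\dots,n+1\}$, $r\in\{0,\dots,k\}$ are defined recursively: $\mathrm{ALG}^{\ge\ell}_0=\emptyset$ for all $\ell$, $\mathrm{ALG}^{\ge n+1}_r=\emptyset$ for all $r$, and for $\ell\in[n]$, $r\ge1$, letting $j$ be the item arriving in round $\ell$: $\mathrm{ALG}^{\ge\ell}_r=\{j\}\cup\mathrm{ALG}^{\ge\ell+1}_{r-1}$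 if $j\in\mathcal{A}(U^{\le\ell})$, and $\mathrm{ALG}^{\ge\ell}_r=\mathrm{ALG}^{\ge\ell+1}_{r}$ otherwise. (Thus $\mathrm{ALG}^{\ge\ell}_r$ is the set of the first $r$ items a run of the selection rule ''accept the arriving item if it lies in $\mathcal{A}(U^{\le\ell})$ and capacity remains'' would accept if started in round $\ell$ with remaining capacity $r$.) *)

(* Defs.v *)
From HB Require Import structures.
From mathcomp Require Import all_boot all_order all_algebra all_fingroup.
Set Implicit Arguments. Unset Strict Implicit. Unset Printing Implicit Defensive.
Import Order.TTheory GRing.Theory Num.Theory.
Local Open Scope ring_scope.

Section Secretary.
Variable U : finType.

(* A uniformly random arrival order is a uniformly random permutation
   sigma of U; the item arriving in round i (1-based) is the i-th entry of
   [arrival sigma] = map sigma (enum U). *)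
Definition arrival (sigma : {perm U}) : seq U := map sigma (enum U).

Definition prefixSet (sigma : {perm U}) (l : nat) : {set U} :=
  [set x in take l (arrival sigma)].

(* Run of the selection rule: [pre] = items that arrived before, [suf] =
   items still to arrive (in order), r = remaining capacity. *)
Fixpoint algRun (A : {set U} -> {set U}) (pre suf : seq U) (r : nat)
  : {set U} :=
  match suf with
  | [::] => set0
  | j :: suf' =>
      match r with
      | 0%N => set0
      | r'.+1 =>
          let pre' := rcons pre j in
          if j \in A [set x in pre'] then j |: algRun A pre' suf' r'
          else algRun A pre' suf' r
      end
  end.

(* ALG^{>= l}_r for the arrival order sigma, l in {1,..,n+1} *)
Definition ALG (A : {set U} -> {set U}) (sigma : {perm U}) (l r : nat)
  : {set U} :=
  algRun A (take l.-1 (arrival sigma)) (drop l.-1 (arrival sigma)) r.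

Definition Exp (R : numFieldType) (f : {perm U} -> R) : R :=
  (\sum_(sigma : {perm U}) f sigma) / (#|{perm U}|)%:R.

End Secretary.

(* Main.v *)
Require Import Defs.
From HB Require Import structures.
From mathcomp Require Import all_boot all_order all_algebra all_fingroup.
From mathcomp Require Import ring lra.
Import Order.TTheory GRing.Theory Num.Theory.
Local Open Scope ring_scope.

Section Helpers.
Variable U : finType.

Lemma algRun_pre (A : {set U} -> {set U}) (pre1 pre2 suf : seq U) r :
  [set x in pre1] = [set x in pre2] -> algRun A pre1 suf r = algRun A pre2 suf r.
Proof.
elim: suf pre1 pre2 r => [|j suf IH] pre1 pre2 r E //=.
case: r => [|r] //.
have E' : [set x in rcons pre1 j] = [set x in rcons pre2 j].
  apply/setP => y; move/setP: E => /(_ y); rewrite !inE !mem_rcons !in_cons => ->. done.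
by rewrite E' !(IH (rcons pre1 j) (rcons pre2 j) _ E').
Qed.

Lemma algRun_mono (A : {set U} -> {set U}) pre suf r :
  algRun A pre suf r \subset algRun A pre suf r.+1.
Proof.
elim: suf pre r => [|j suf IH] pre r /=; first by rewrite sub0set.
case: r => [|r] /=; first by rewrite sub0set.
case: ifP => _; last exact: IH.
by rewrite setUS // IH.
Qed.

Lemma ALG_step (A : {set U} -> {set U}) (s : {perm U}) x0 l r :
  (0 < l <= #|U|)%N -> (0 < r)%N ->
  ALG A s l r =
   if nth x0 (arrival s) l.-1 \in A [set x in take l (arrival s)]
   then nth x0 (arrival s) l.-1 |: algRun A (take l (arrival s)) (drop l (arrival s)) r.-1
   else algRun A (take l (arrival s)) (drop l (arrival s)) r.
Proof.
case: l => [|l] //= lU; case: r => [|r] // _.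
have hs : (l < size (arrival s))%N by rewrite size_map -cardT.
rewrite /ALG /= (drop_nth x0) //=.
by rewrite -take_nth.
Qed.

Lemma swap_facts (e : seq U) (x0 : U) l i : uniq e -> (i < l)%N -> (l <= size e)%N ->
  [/\ take l (map (tperm (nth x0 e i) (nth x0 e l.-1)) e) =i take l e,
      drop l (map (tperm (nth x0 e i) (nth x0 e l.-1)) e) = drop l e &
      nth x0 (map (tperm (nth x0 e i) (nth x0 e l.-1)) e) l.-1 = nth x0 e i].
Proof.
move=> ue il le.
have l0 : (0 < l)%N by apply: leq_ltn_trans il.
have l1 : (l.-1 < l)%N by rewrite ltn_predL.
have inT p : (p < l)%N -> nth x0 e p \in take l e.
  by move=> hp; rewrite -(nth_take x0 hp); apply: mem_nth; rewrite size_takel.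
have disj y : y \in drop l e -> y \notin take l e.
  move: ue; rewrite -{1}(cat_take_drop l e) cat_uniq => /and3P[_ /hasPn H _].
  exact: H.
split.
- move=> y; rewrite -map_take.
  rewrite -{1}(tpermK (nth x0 e i) (nth x0 e l.-1) y) mem_map; last exact: perm_inj.
  case: tpermP => [->|->|_ _] //; by rewrite !inT.
- rewrite -map_drop; apply: map_id_in => y /disj Hy.
  rewrite tpermD //; apply: contraNneq Hy => <-; exact: inT.
- rewrite (nth_map x0); last by apply: leq_trans le.
  by rewrite tpermR.
Qed.

Variable R : realFieldType.

Lemma submod_sum (v : {set U} -> R)
  (v_mono : forall S T : {set U}, S \subset T -> v S <= v T)
  (v_submod : forall S T : {set U}, v (S :|: T) + v (S :&: T) <= v S + v T)
  (B : {set U}) n : forall S : {set U}, #|S| = n ->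
  v (S :|: B) + (#|S|%:R - 1) * v B <= \sum_(x in S) v (x |: B).
Proof.
elim: n => [|n IH] S cS.
  move/eqP: cS; rewrite cards_eq0 => /eqP ->.
  rewrite big_set0 set0U cards0. lra.
have : (0 < #|S|)%N by rewrite cS.
case/card_gt0P => x xS.
rewrite (bigD1 x) //=.
have cS' : #|S :\ x| = n by move: cS; rewrite (cardsD1 x S) xS add1n => -[].
have H := IH _ cS'.
rewrite (eq_bigl (fun y => y \in S :\ x)) /=; last by move=> y; rewrite !inE andbC.
have := v_submod (x |: B) ((S :\ x) :|: B).
have -> : (x |: B) :|: ((S :\ x) :|: B) = S :|: B.
  apply/setP => y; rewrite !inE.
  case: (eqVneq y x) => [->|]; first by rewrite xS.
  by case: (y \in S); case: (y \in B).
have hB : v B <= v ((x |: B) :&: ((S :\ x) :|: B)).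
  by apply: v_mono; rewrite subsetI !subsetUr.
rewrite cS' in H; rewrite cS -addn1 natrD => H2.
lra.
Qed.

End Helpers.

Theorem mainTheorem3 (R : realFieldType) (U : finType) (k : nat)
  (v : {set U} -> R) (A : {set U} -> {set U}) (alpha : R)
  (hk : (1 <= k)%N)
  (v_nonneg : forall S : {set U}, 0 <= v S)
  (v_mono : forall S T : {set U}, S \subset T -> v S <= v T)
  (v_submod : forall S T : {set U}, v (S :|: T) + v (S :&: T) <= v S + v T)
  (halpha : 0 < alpha <= 1)
  (A_sub : forall L : {set U}, A L \subset L)
  (A_card : forall L : {set U}, (#|A L| <= k)%N)
  (A_approx : forall L T : {set U}, T \subset L -> (#|T| <= k)%N ->
                alpha * v T <= v (A L)) :
  forall l r : nat, (1 <= l <= #|U|)%N -> (1 <= r <= k)%N ->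
    Exp (fun sigma => v (ALG A sigma l r)) >=
      (l%:R)^-1 *
        (Exp (fun sigma => v (A (prefixSet sigma l)))
         + (k%:R - 1) * Exp (fun sigma => v (ALG A sigma l.+1 r.-1))
         + (l%:R - k%:R) * Exp (fun sigma => v (ALG A sigma l.+1 r))).
Proof.
move=> l r hl /andP[r1 rk].
have lU : (l <= #|U|)%N by case/andP: hl.
have l1 : (0 < l)%N by case/andP: hl.
have : (0 < #|U|)%N by apply: leq_trans lU.
case/card_gt0P => x0 _.
set e := enum U.
have se : size e = #|U| by rewrite cardT.
have ue : uniq e := enum_uniq _.
pose t i := tperm (nth x0 e i) (nth x0 e l.-1).
have arrT i s : arrival (t i * s)%g = map s (map (t i) e).
  by rewrite /arrival -map_comp; apply: eq_map => y; rewrite /= permM.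
have arrS s : arrival s = map s e by [].
have le : (l <= size e)%N by rewrite se.
have stepT s i : (i < l)%N ->
  ALG A (t i * s)%g l r =
   if nth (s x0) (arrival s) i \in A [set x in take l (arrival s)]
   then nth (s x0) (arrival s) i |: algRun A (take l (arrival s)) (drop l (arrival s)) r.-1
   else algRun A (take l (arrival s)) (drop l (arrival s)) r.
  move=> il.
  have [F1 F2 F3] := @swap_facts _ e x0 l i ue il le.
  rewrite -/(t i) in F1 F2 F3.
  rewrite (@ALG_step U A _ (s x0)) //.
  have Ps : [set x in take l (arrival (t i * s)%g)] = [set x in take l (arrival s)].
    apply/setP => y; rewrite !inE arrT arrS -(map_take l s (map (t i) e)) -(map_take l s e).
    exact: (eq_mem_map s F1 y).
  have Ds : drop l (arrival (t i * s)%g) = drop l (arrival s).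
    by rewrite arrT arrS -(map_drop l s (map (t i) e)) -(map_drop l s e) /t F2.
  have ie : (i < size e)%N by apply: leq_trans le.
  have l1e : (l.-1 < size e)%N by apply: leq_trans le; rewrite ltn_predL.
  have Ns : nth (s x0) (arrival (t i * s)%g) l.-1 = nth (s x0) (arrival s) i.
    rewrite arrT arrS (nth_map x0); last by rewrite size_map; exact: l1e.
    by rewrite F3 (nth_map x0).
  by rewrite Ns Ds Ps !(@algRun_pre U A _ _ _ _ Ps).
have point s :
  v (A (prefixSet s l)) + (k%:R - 1) * v (ALG A s l.+1 r.-1) + (l%:R - k%:R) * v (ALG A s l.+1 r)
  <= \sum_(0 <= i < l) v (ALG A (t i * s)%g l r).
  set a := arrival s.
  set L := [set x in take l a].
  set B := algRun A (take l a) (drop l a) r.-1.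
  set C := algRun A (take l a) (drop l a) r.
  have -> : ALG A s l.+1 r.-1 = B by [].
  have -> : ALG A s l.+1 r = C by [].
  have -> : prefixSet s l = L by [].
  pose g x := if x \in A L then v (x |: B) else v C.
  rewrite (@eq_big_nat _ _ _ 0 l _ (fun i => g (nth (s x0) (take l a) i))); last first.
    move=> i /andP[_ il]; rewrite stepT // nth_take // -/a -/L -/B -/C /g.
    by case: (_ \in _).
  have sz : size (take l a) = l by rewrite size_takel // size_map.
  have uA : uniq (take l a) by apply: take_uniq; rewrite map_inj_uniq //; exact: perm_inj.
  have -> : \sum_(0 <= i < l) g (nth (s x0) (take l a) i) = \sum_(x <- take l a) g x.
    by rewrite (big_nth (s x0)) sz.
  rewrite big_uniq //.
  rewrite (eq_bigl (fun x => x \in L)); last by move=> y; rewrite inE.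
  rewrite (bigID (fun x => x \in A L)) /=.
  have E1 : \sum_(x in L | x \in A L) g x = \sum_(x in A L) v (x |: B).
    apply: eq_big => [y|y /andP[_ h]]; last by rewrite /g h.
    by rewrite andb_idl // => /(subsetP (A_sub L)).
  have E2 : \sum_(x in L | x \notin A L) g x = v C *+ #|L :\: A L|.
    rewrite -sumr_const; apply: eq_big => [y|y /andP[_ h]]; first by rewrite !inE andbC.
    by rewrite /g (negbTE h).
  rewrite E1 E2.
  have cL : #|L| = l by rewrite cardsE; move/card_uniqP: uA => ->.
  have cD : (#|A L| + #|L :\: A L| = l)%N.
    by rewrite -cL -(cardsID (A L) L) (setIidPr (A_sub L)).
  have Hs := @submod_sum U R v v_mono v_submod B _ (A L) erefl.
  have HS : v (A L) <= v (A L :|: B) by apply: v_mono; rewrite subsetUl.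
  have HBC : v B <= v C.
    apply: v_mono; move: (@algRun_mono U A (take l a) (drop l a) r.-1).
    by rewrite prednK.
  have Hk : (#|A L|%:R : R) <= k%:R by rewrite ler_nat.
  have cDR : (#|L :\: A L|%:R : R) = l%:R - #|A L|%:R by rewrite -cD natrD; ring.
  rewrite -[v C *+ _]mulr_natl cDR.
  have P : 0 <= (k%:R - #|A L|%:R) * (v C - v B) by apply: mulr_ge0; rewrite subr_ge0.
  nra.
have sumEq : l%:R * \sum_s v (ALG A s l r) =
    \sum_s \sum_(0 <= i < l) v (ALG A (t i * s)%g l r).
  rewrite exchange_big /= mulr_natl -(subn0 l) -sumr_const_nat subn0.
  apply: eq_big_nat => i /andP[_ il].
  exact: (reindex_inj (mulgI (t i))).
have key : \sum_s (v (A (prefixSet s l)) + (k%:R - 1) * v (ALG A s l.+1 r.-1)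
              + (l%:R - k%:R) * v (ALG A s l.+1 r)) <= l%:R * \sum_s v (ALG A s l r).
  by rewrite sumEq; apply: ler_sum => s _; exact: point s.
rewrite !big_split /= -!mulr_sumr in key.
rewrite /Exp.
set N := (#|{perm U}|)%:R.
have N0 : 0 < N by rewrite ltr0n; apply/card_gt0P; exists 1%g.
have lR : 0 < (l%:R : R) by rewrite ltr0n.
move: key.
set SA := \sum_s v (A (prefixSet s l)).
set SB := \sum_s v (ALG A s l.+1 r.-1).
set SC := \sum_s v (ALG A s l.+1 r).
set SL := \sum_s v (ALG A s l r).
move=> key.
have N0' : N != 0 by rewrite gt_eqF.
have l0' : (l%:R : R) != 0 by rewrite gt_eqF.
have -> : l%:R^-1 * (SA / N + (k%:R - 1) * (SB / N) + (l%:R - k%:R) * (SC / N))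
   = (SA + (k%:R - 1) * SB + (l%:R - k%:R) * SC) / (l%:R * N).
  by field; apply/andP; split.
rewrite (ler_pdivrMr _ _ (mulr_gt0 lR N0)).
have -> : SL / N * (l%:R * N) = l%:R * SL by field.
exact: key.
Qed.
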